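(* If $N$ is odd and divisible by $3$, then $\rho(2/3,N)=2/9$.
   Context: For an integer $N\ge 2$ and $f:\mathbb{Z}_N\to\mathbb{C}$, define $\mathbb{E}(f)=\frac1N\sum_{n\in\mathbb{Z}_N} f(n)$ and $\Lambda_3(f)=\frac{1}{N^2}\sum_{n,d\in\mathbb{Z}_N} f(n)f(n+d)f(n+2d)$. For $\upsilon\in(0,1]$, $\rho(\upsilon,N)=\min\{\Lambda_3(f): f:\mathbb{Z}_N\to[0,1],\ \mathbb{E}(f)\ge\upsilon\}$. *)

(* Defs.v *)
From HB Require Import structures.
From mathcomp Require Import all_boot all_order all_algebra.
From mathcomp Require Import reals.
Set Implicit Arguments. Unset Strict Implicit. Unset Printing Implicit Defensive.
Import Order.TTheory GRing.Theory Num.Theory.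
Local Open Scope ring_scope.

(* Functions f : Z_N -> R, with 'Z_N the ring of integers mod N (used for N >= 2). *)

Definition EE (R : realType) (N : nat) (f : 'Z_N -> R) : R :=
  N%:R^-1 * \sum_(n : 'Z_N) f n.

Definition Lambda3 (R : realType) (N : nat) (f : 'Z_N -> R) : R :=
  (N%:R ^+ 2)^-1 *
    \sum_(n : 'Z_N) \sum_(d : 'Z_N) f n * f (n + d) * f (n + d *+ 2).

Definition admissible (R : realType) (N : nat) (v : R) (f : 'Z_N -> R) : Prop :=
  (forall n, 0 <= f n <= 1) /\ v <= EE f.

(* r = rho(v, N) = min { Lambda3 f : f admissible } : the minimum is attained
   and equals r. *)
Definition is_rho (R : realType) (v : R) (N : nat) (r : R) : Prop :=
  (exists f : 'Z_N -> R, admissible v f /\ Lambda3 f = r) /\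
  (forall f : 'Z_N -> R, admissible v f -> r <= Lambda3 f).

(* Main.v *)
Require Import Defs.
From HB Require Import structures.
From mathcomp Require Import all_boot all_order all_algebra.
From mathcomp Require Import reals ring lra.
Import Order.TTheory GRing.Theory Num.Theory.
Local Open Scope ring_scope.

Section S.
Variable (R : realType) (N : nat).
Hypothesis N2 : (2 <= N)%N.
Hypothesis Nodd : odd N.

Lemma shift_sum (F : 'Z_N -> R) (n : 'Z_N) : \sum_d F (n + d) = \sum_d F d.
Proof. by rewrite [RHS](reindex_inj (addrI n)). Qed.

Lemma two_unit : (2%:R : 'Z_N) \is a GRing.unit.
Proof. by rewrite unitZpE // coprimen2. Qed.

Lemma dbl_sum (F : 'Z_N -> R) (n : 'Z_N) : \sum_d F (n + d *+ 2) = \sum_d F d.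
Proof.
rewrite -(shift_sum F n).
have inj : injective (fun d : 'Z_N => d *+ 2).
  by move=> x y /=; rewrite -[x *+ 2]mulr_natr -[y *+ 2]mulr_natr; apply: (mulIr two_unit).
by rewrite [RHS](reindex_inj inj).
Qed.

Lemma pair_sum2 (F : 'Z_N -> R) :
  \sum_n \sum_d F (n + d) * F (n + d *+ 2) = (\sum_n F n) ^+ 2.
Proof.
rewrite exchange_big /=.
under eq_bigr => d _.
  rewrite (reindex_inj (addrI (-d))) /=.
  under eq_bigr => m _ do rewrite (addrC (-d) m) addrNK mulr2n addrA addrNK.
  over.
rewrite exchange_big /= expr2 big_distrl /=.
by apply: eq_bigr => n _; rewrite -mulr_sumr shift_sum.
Qed.

Lemma card_ZN : #|'Z_N| = N.
Proof. by rewrite card_ord Zp_cast. Qed.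

Lemma ptwise (x y z : R) : 0 <= x <= 1 -> 0 <= y <= 1 -> 0 <= z <= 1 ->
  2 * (x * y + y * z + x * z) - (x + y + z) <= 3 * (x * y * z).
Proof.
move=> /andP[x0 x1] /andP[y0 y1] /andP[z0 z1].
rewrite -subr_ge0.
have -> : 3 * (x * y * z) - (2 * (x * y + y * z + x * z) - (x + y + z)) =
  x * (1 - y) * (1 - z) + y * (1 - x) * (1 - z) + z * (1 - x) * (1 - y) by ring.
have a : 0 <= 1 - x by rewrite subr_ge0.
have b : 0 <= 1 - y by rewrite subr_ge0.
have c : 0 <= 1 - z by rewrite subr_ge0.
by rewrite !addr_ge0 // !mulr_ge0.
Qed.

Lemma lower (f : 'Z_N -> R) : (forall n, 0 <= f n <= 1) ->
  2 * (\sum_n f n) ^+ 2 - N%:R * (\sum_n f n) <=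
  \sum_n \sum_d f n * f (n + d) * f (n + d *+ 2).
Proof.
move=> hf.
set S := \sum_n f n.
rewrite -(@ler_pM2l _ 3) // [X in _ <= X]mulr_sumr.
under [X in _ <= X]eq_bigr => n _ do rewrite mulr_sumr.
apply: (@le_trans _ _ (\sum_n \sum_d (2 * (f n * f (n + d) + f (n + d) * f (n + d *+ 2) + f n * f (n + d *+ 2)) - (f n + f (n + d) + f (n + d *+ 2))))); last first.
  by apply: ler_sum => n _; apply: ler_sum => d _; apply: ptwise.
have eA : \sum_n \sum_d f n * f (n + d) = S ^+ 2.
  rewrite expr2 big_distrl /=; apply: eq_bigr => n _.
  by rewrite -mulr_sumr shift_sum.
have eC : \sum_n \sum_d f n * f (n + d *+ 2) = S ^+ 2.
  rewrite expr2 big_distrl /=; apply: eq_bigr => n _.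
  by rewrite -mulr_sumr dbl_sum.
have eB := pair_sum2 f.
have eD : \sum_n \sum_d (f n + f (n + d) + f (n + d *+ 2)) = 3 * (N%:R * S).
  under eq_bigr => n _ do rewrite !big_split /= shift_sum dbl_sum sumr_const card_ZN.
  rewrite !big_split /= !sumr_const card_ZN sumrMnl -/S -[S *+ N]mulr_natr; ring.
under eq_bigr => n _ do rewrite sumrB -mulr_sumr.
rewrite sumrB -mulr_sumr eD.
under eq_bigr => n _ do rewrite !big_split /=.
rewrite !big_split /= eA eB eC.
rewrite -/S le_eqVlt; apply/orP; left; apply/eqP; ring.
Qed.

Lemma valZ (n d : 'Z_N) k : (n + d *+ k : 'Z_N) = (((n : nat) + (d : nat) * k) %% N)%N :> nat.
Proof.
have -> : n + d *+ k = ((n : nat) + (d : nat) * k)%:R :> 'Z_N.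
  by rewrite natrD natrM mulr_natr !natr_Zp.
exact: val_Zp_nat.
Qed.

Lemma sum_val (G : nat -> R) : \sum_(x : 'Z_N) G (val x) = \sum_(0 <= i < N) G i.
Proof. by rewrite -[in RHS](Zp_cast N2) big_mkord. Qed.

End S.

Lemma sum_per (R : realType) (G : nat -> R) (k : nat) :
  \sum_(0 <= i < 3 * k) G (i %% 3)%N = k%:R * (G 0%N + G 1%N + G 2%N).
Proof.
elim: k => [|k IH]; first by rewrite big_geq //= mul0r.
have -> : (3 * k.+1 = (3 * k).+2.+1)%N by rewrite mulnS.
rewrite !big_nat_recr //= IH.
have e0 : ((3 * k) %% 3 = 0)%N by rewrite mulnC modnMl.
have e1 : ((3 * k).+1 %% 3 = 1)%N by rewrite -addn1 mulnC modnMDl.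
have e2 : ((3 * k).+2 %% 3 = 2)%N by rewrite -addn2 mulnC modnMDl.
rewrite e0 e1 e2 -natr1; ring.
Qed.

Lemma key3 n d : [&& n %% 3 != 0, (n + d * 1) %% 3 != 0 & (n + d * 2) %% 3 != 0]%N
   = ((n %% 3 != 0) && (d %% 3 == 0))%N.
Proof.
rewrite -(modnDm n (d * 1)) -(modnDm n (d * 2)) -(modnMml d 1) -(modnMml d 2).
have ha : (n %% 3 < 3)%N by rewrite ltn_pmod.
have hb : (d %% 3 < 3)%N by rewrite ltn_pmod.
move: (n %% 3)%N (d %% 3)%N ha hb => a b.
by case: a => [|[|[|a]]] //; case: b => [|[|[|b]]].
Qed.

Theorem mainTheorem10 (R : realType) (N : nat) :
  (2 <= N)%N -> odd N -> (3 %| N)%N ->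
  is_rho (2%:R / 3%:R : R) N (2%:R / 9%:R).
Proof.
move=> N2 Nodd h3.
have [k hk] : exists k, N = (3 * k)%N by case/dvdnP: h3 => k ->; exists k; rewrite mulnC.
have k0 : (k%:R : R) != 0 by rewrite pnatr_eq0; apply/eqP => k0; move: N2; rewrite hk k0.
have N0 : (N%:R : R) != 0 by rewrite pnatr_eq0; apply/eqP => N0; move: N2; rewrite N0.
split.
  pose f := fun x : 'Z_N => (((x : nat) %% 3)%N != 0%N)%:R : R.
  exists f; split; [split|].
  - by move=> n; rewrite /f; case: (_ != _) => /=; rewrite ?lexx ?ler01.
  - rewrite /EE /f (@sum_val R N N2 (fun i => ((i %% 3)%N != 0%N)%:R)) hk (@sum_per R (fun j => (j != 0%N)%:R)) /=.
    rewrite le_eqVlt; apply/orP; left; apply/eqP.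
    rewrite natrM; field. by rewrite k0.
  - rewrite /Lambda3.
    have e : forall n d : 'Z_N, f n * f (n + d) * f (n + d *+ 2) =
        (((n : nat) %% 3)%N != 0%N)%:R * ((((d : nat) %% 3)%N == 0%N)%:R : R).
      move=> n d; rewrite /f -{1}[d]mulr1n !valZ // !modn_dvdm //.
      by rewrite -!natrM !mulnb -andbA key3.
    under eq_bigr => n _ do (under eq_bigr => d _ do rewrite e; rewrite -mulr_sumr).
    rewrite -mulr_suml.
    rewrite (@sum_val R N N2 (fun i => ((i %% 3)%N != 0%N)%:R)).
    rewrite (@sum_val R N N2 (fun i => ((i %% 3)%N == 0%N)%:R)).
    rewrite hk (@sum_per R (fun j => (j != 0%N)%:R)) (@sum_per R (fun j => (j == 0%N)%:R)) /= natrM; field. by rewrite k0.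
move=> f [hf hE].
have low := @lower R N N2 Nodd f hf.
set S := \sum_n f n in low.
set e := EE f in hE.
have hS : S = N%:R * e by rewrite /e /EE mulVKf.
rewrite /Lambda3.
apply: (@le_trans _ _ ((N%:R ^+ 2)^-1 * (2 * S ^+ 2 - N%:R * S))); last first.
  by rewrite ler_wpM2l // invr_ge0 exprn_ge0.
have -> : (N%:R ^+ 2)^-1 * (2 * S ^+ 2 - N%:R * S) = 2 * e ^+ 2 - e.
  by rewrite hS; field.
nra.
Qed.
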